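(* Let $(G,Y)$ be a finite $C$-group with $Y=C_1\sqcup\dots\sqcup C_m$, and let $Y'=C_1\sqcup\dots\sqcup C_k$ be ample. Let $G'$ be the group with generators $u_y$ ($y\in Y'$) and relations $u_z^{-1}u_yu_z=u_{z^{-1}yz}$ for all $y,z\in Y'$ (where $z^{-1}yz$ is computed in $G$), and let $i_*:G'\to G$ be the homomorphism $u_y\mapsto y$. Then the restriction of $i_*$ to $[G',G']$ is an epimorphism onto $[G,G]$.
   Context: A finite $C$-group is a pair $(G,Y)$ with $Y$ a finite conjugation-invariant subset of the group $G$, $1\notin Y$, such that $G$ has a presentation with generators the elements of $Y$ and defining relations all of the form $z^{-1}yz=y'$ ($y,y',z\in Y$). $Y=C_1\sqcup\dots\sqcup C_m$ is the decomposition into conjugacy classes of $G$. A union $Y'=C_1\sqcup\dots\sqcup C_k$ of some of these classes is ample if any two elements of $Y$ that are conjugate in $G$ are conjugate by an element of the subgroup generated by $Y'$. *)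

(* Defs.v *)
From Stdlib Require Import List.
Set Implicit Arguments.

Record group := Group {
  carrier :> Type;
  gmul : carrier -> carrier -> carrier;
  ginv : carrier -> carrier;
  gone : carrier;
  gmulA : forall x y z, gmul x (gmul y z) = gmul (gmul x y) z;
  gmul1l : forall x, gmul gone x = x;
  gmulVl : forall x, gmul (ginv x) x = gone }.

Arguments gmul {g} _ _.
Arguments ginv {g} _.
Arguments gone {g}.

Definition is_hom {G H : group} (f : G -> H) : Prop :=
  forall x y : G, f (gmul x y) = gmul (f x) (f y).

Definition subgroup_pred {G : group} (P : G -> Prop) : Prop :=
  P gone /\ (forall x y, P x -> P y -> P (gmul x y)) /\ (forall x, P x -> P (ginv x)).

Definition generated {G : group} (S : G -> Prop) (x : G) : Prop :=
  forall P : G -> Prop, subgroup_pred P -> (forall s, S s -> P s) -> P x.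

Definition conjg {G : group} (y z : G) : G := gmul (gmul (ginv z) y) z.
Definition commg {G : group} (a b : G) : G := gmul (gmul (ginv a) (ginv b)) (gmul a b).

Definition derived {G : group} : G -> Prop :=
  generated (fun c : G => exists a b : G, c = commg a b).

Definition finite_subset {G : group} (Y : G -> Prop) : Prop :=
  exists s : list G, forall x, Y x <-> In x s.

Definition conj_invariant {G : group} (Y : G -> Prop) : Prop :=
  forall y g : G, Y y -> Y (conjg y g).

Definition conj_relations_hold {G H : group} (Y : G -> Prop) (f : G -> H) : Prop :=
  forall y z : G, Y y -> Y z -> conjg (f y) (f z) = f (conjg y z).

(* (H, u) is the group presented by generators u_y (y in Y) and the relations
   u_z^{-1} u_y u_z = u_{z^{-1} y z} (y, z in Y): u satisfies the relations, the
   u_y generate H, and H has the universal property of the presentation. *)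
Definition presents_by_conj_relations {G : group} (Y : G -> Prop) (H : group) (u : G -> H)
  : Prop :=
  conj_relations_hold Y u /\
  (forall h : H, generated (fun x : H => exists y, Y y /\ x = u y) h) /\
  (forall (K : group) (f : G -> K), conj_relations_hold Y f ->
     exists phi : H -> K, is_hom phi /\ forall y, Y y -> phi (u y) = f y).

Definition is_finite_C_group {G : group} (Y : G -> Prop) : Prop :=
  finite_subset Y /\ conj_invariant Y /\ ~ Y gone /\
  presents_by_conj_relations Y G (fun x : G => x).

Definition ample {G : group} (Y Y' : G -> Prop) : Prop :=
  forall y1 y2 : G, Y y1 -> Y y2 -> (exists g : G, y2 = conjg y1 g) ->
    exists g : G, generated Y' g /\ y2 = conjg y1 g.

(* Main.v *)
Require Import Defs.

Section GT.
Variable G : group.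
Implicit Types x y z : G.

Lemma mulVr x : gmul x (ginv x) = gone.
Proof.
  rewrite <- (gmul1l _ (gmul x (ginv x))).
  rewrite <- (gmulVl _ (ginv x)) at 1.
  rewrite <- gmulA. rewrite (gmulA _ (ginv x) x (ginv x)). rewrite gmulVl, gmul1l.
  apply gmulVl.
Qed.

Lemma mulr1 x : gmul x gone = x.
Proof. rewrite <- (gmulVl _ x), gmulA, mulVr, gmul1l. reflexivity. Qed.

Lemma inv_uniq x y : gmul x y = gone -> ginv x = y.
Proof.
  intro H. rewrite <- (mulr1 (ginv x)), <- H, gmulA, gmulVl, gmul1l. reflexivity.
Qed.

Lemma invK x : ginv (ginv x) = x.
Proof. apply inv_uniq, gmulVl. Qed.

Lemma invM x y : ginv (gmul x y) = gmul (ginv y) (ginv x).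
Proof.
  apply inv_uniq. rewrite gmulA, <- (gmulA _ x y), mulVr, mulr1, mulVr. reflexivity.
Qed.

Lemma inv1 : ginv (@gone G) = gone.
Proof. apply inv_uniq, gmul1l. Qed.

Lemma mulVK x y : gmul (gmul x (ginv y)) y = x.
Proof. rewrite <- gmulA, gmulVl, mulr1. reflexivity. Qed.

Lemma mulKV x y : gmul (gmul x y) (ginv y) = x.
Proof. rewrite <- gmulA, mulVr, mulr1. reflexivity. Qed.

End GT.

Ltac gsimpl := unfold conjg, commg in *;
  repeat progress (rewrite ?invM, ?invK, ?inv1, ?gmulA, ?mulVK, ?mulKV,
     ?gmulVl, ?mulVr, ?gmul1l, ?mulr1).

Lemma hom1 (G H : group) (f : G -> H) : is_hom f -> f gone = gone.
Proof.
  intro Hf. assert (E : f gone = gmul (f gone) (f gone)) by (rewrite <- Hf, gmul1l; reflexivity).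
  transitivity (gmul (ginv (f gone)) (gmul (f gone) (f gone))).
  - rewrite gmulA, gmulVl, gmul1l; reflexivity.
  - rewrite <- E; apply gmulVl.
Qed.

Lemma homV (G H : group) (f : G -> H) (Hf : is_hom f) x : f (ginv x) = ginv (f x).
Proof.
 symmetry. apply inv_uniq. rewrite <- Hf, mulVr. apply hom1; auto.
Qed.

Arguments homV {G H f} Hf x.

Lemma hom_conj (G H : group) (f : G -> H) x y : is_hom f -> f (conjg x y) = conjg (f x) (f y).
Proof. intro Hf. unfold conjg. rewrite !Hf, (homV Hf); auto. Qed.

Lemma hom_comm (G H : group) (f : G -> H) x y : is_hom f -> f (commg x y) = commg (f x) (f y).
Proof. intro Hf. unfold commg. rewrite !Hf, !(homV Hf); auto. Qed.

Lemma gen_sub (G : group) (S : G -> Prop) : subgroup_pred (generated S).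
Proof.
  repeat split.
  - intros P [H1 _] _. exact H1.
  - intros x y Hx Hy P HP HS. destruct HP as (H1 & H2 & H3). apply H2; [apply Hx|apply Hy]; repeat split; auto.
  - intros x Hx P HP HS. destruct HP as (H1 & H2 & H3). apply H3; apply Hx; repeat split; auto.
Qed.

Arguments gen_sub {G} S.

Lemma gen_in (G : group) (S : G -> Prop) x : S x -> generated S x.
Proof. intros Hx P _ HS. auto. Qed.

Arguments gen_in {G S x} _.

Lemma hom_derived (G H : group) (f : G -> H) x : is_hom f -> derived x -> derived (f x).
Proof.
  intros Hf Hx. apply Hx; unfold derived in *.
  - destruct (gen_sub (fun c : H => exists a b : H, c = commg a b)) as (H1 & H2 & H3).
    repeat split.
    + rewrite hom1; auto.
    + intros a b Ha Hb. rewrite Hf. auto.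
    + intros a Ha. rewrite (homV Hf); auto.
  - intros s (a & b & ->). apply gen_in. exists (f a), (f b). apply hom_comm; auto.
Qed.

Section Comm.
Variable G : group.
Variable N : G -> Prop.
Hypothesis HN : subgroup_pred N.
Hypothesis Hnorm : forall x g, N x -> N (conjg x g).

Lemma commB a : subgroup_pred (fun b => N (commg a b)).
Proof.
  destruct HN as (H1 & H2 & H3). repeat split.
  - replace (commg a gone) with (@gone G) by (gsimpl; reflexivity). auto.
  - intros x y Hx Hy.
    replace (commg a (gmul x y)) with (gmul (commg a y) (conjg (commg a x) y))
      by (gsimpl; reflexivity). auto.
  - intros x Hx.
    replace (commg a (ginv x)) with (ginv (conjg (commg a x) (ginv x)))
      by (gsimpl; reflexivity). auto.
Qed.

Lemma commA : subgroup_pred (fun a => forall b, N (commg a b)).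
Proof.
  destruct HN as (H1 & H2 & H3). repeat split.
  - intro b. replace (commg gone b) with (@gone G) by (gsimpl; reflexivity). auto.
  - intros x y Hx Hy b.
    replace (commg (gmul x y) b) with (gmul (conjg (commg x b) y) (commg y b))
      by (gsimpl; reflexivity). auto.
  - intros x Hx b.
    replace (commg (ginv x) b) with (ginv (conjg (commg x b) (ginv x)))
      by (gsimpl; reflexivity). auto.
Qed.
End Comm.

Theorem proposition2p19 (G : group) (Y Y' : G -> Prop) (G' : group)
  (u : G -> G') (istar : G' -> G) :
  is_finite_C_group Y ->
  (forall x, Y' x -> Y x) -> conj_invariant Y' ->
  ample Y Y' ->
  presents_by_conj_relations Y' G' u ->
  is_hom istar -> (forall y, Y' y -> istar (u y) = y) ->
  forall g : G, @derived G g <-> exists h : G', @derived G' h /\ istar h = g.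
Proof.
  intros (Hfin & HinvY & H1Y & _ & HgenG & _) HY'Y HinvY' Hample (Hrel' & Hgen' & Huniv')
    Hi Hiu g.
  split; [|intros (h & Hh & <-); apply hom_derived; auto].
  set (N := fun x : G => exists h : G', derived h /\ istar h = x).
  assert (HN : subgroup_pred N).
  { destruct (gen_sub (fun c : G' => exists a b : G', c = commg a b)) as (D1 & D2 & D3).
    repeat split.
    - exists gone. split; [exact D1|apply hom1; auto].
    - intros x y (a & Ha & <-) (b & Hb & <-). exists (gmul a b). split; [apply D2; [exact Ha|exact Hb]|apply Hi].
    - intros x (a & Ha & <-). exists (ginv a). split; [apply D3; exact Ha|apply (homV Hi)]. }
  assert (Hnorm : forall x g, N x -> N (conjg x g)).
  { intros x g0 (h & Hh & <-).
    destruct (Huniv' G' (fun a => u (conjg a g0))) as (phi & Hphi & Hphiu).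
    { intros a b Ha Hb. rewrite Hrel' by auto.
      f_equal. gsimpl. reflexivity. }
    assert (Hc : forall h, istar (phi h) = conjg (istar h) g0).
    { intro k. apply (Hgen' k).
      - repeat split.
        + rewrite !hom1; auto. gsimpl. reflexivity.
        + intros a b Ea Eb. rewrite Hphi, !Hi, Ea, Eb. gsimpl. reflexivity.
        + intros a Ea. rewrite (homV Hphi), !(homV Hi), Ea. gsimpl. reflexivity.
      - intros s (y & Hy & ->). rewrite Hphiu, !Hiu; auto. }
    exists (phi h). split; [apply hom_derived; auto | apply Hc]. }
  assert (Hlift : forall k, generated Y' k -> exists k', istar k' = k).
  { intros k Hk. apply Hk.
    - repeat split.
      + exists gone. apply hom1; auto.
      + intros a b (a' & <-) (b' & <-). exists (gmul a' b'). auto.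
      + intros a (a' & <-). exists (ginv a'). apply (homV Hi).
    - intros s Hs. exists (u s). auto. }
  assert (Hconj : forall k' a, Y' a -> u (conjg a (istar k')) = conjg (u a) k').
  { intro k'. apply (Hgen' k').
    - repeat split.
      + intros a Ha. rewrite hom1 by auto. gsimpl. reflexivity.
      + intros x y Ex Ey a Ha. rewrite Hi.
        replace (conjg a (gmul (istar x) (istar y))) with (conjg (conjg a (istar x)) (istar y))
          by (gsimpl; reflexivity).
        rewrite Ey by auto. rewrite Ex by auto. gsimpl. reflexivity.
      + intros x Ex a Ha.
        set (b := conjg a (ginv (istar x))).
        assert (Hb : Y' b) by (apply HinvY'; auto).
        specialize (Ex b Hb).
        replace (conjg b (istar x)) with a in Ex by (unfold b; gsimpl; reflexivity).
        rewrite (homV Hi). rewrite Ex. unfold b. gsimpl. reflexivity.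
    - intros s (z & Hz & ->) a Ha. rewrite Hiu by auto. symmetry. apply Hrel'; auto. }
  assert (H4 : forall y y', Y y -> Y' y' -> N (commg y y')).
  { intros y y' Hy Hy'.
    set (a := conjg y' y).
    assert (Ha : Y' a) by (apply HinvY'; auto).
    destruct (Hample a y' (HY'Y a Ha) (HY'Y y' Hy')) as (k & Hk & Ek).
    { exists (ginv y). unfold a. gsimpl. reflexivity. }
    destruct (Hlift k Hk) as (k' & <-).
    exists (commg (u a) k'). split.
    - apply gen_in. eauto.
    - rewrite hom_comm, Hiu by auto.
      replace (commg a (istar k')) with (gmul (ginv a) (conjg a (istar k')))
        by (gsimpl; reflexivity).
      rewrite <- Ek. unfold a. gsimpl. reflexivity. }
  assert (H6 : forall y b, Y y -> N (commg y b)).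
  { intros y b Hy.
    destruct (Hample y (conjg y b) Hy (HinvY y b Hy)) as (h & Hh & Eh); [eauto|].
    replace (commg y b) with (gmul (ginv y) (conjg y b)) by (gsimpl; reflexivity).
    rewrite Eh.
    replace (gmul (ginv y) (conjg y h)) with (commg y h) by (gsimpl; reflexivity).
    apply Hh; [apply commB; auto|]. intros s Hs. apply H4; auto. }
  assert (H7 : forall a b, N (commg a b)).
  { intro a. apply (HgenG a); [apply commA; auto|].
    intros s (y & Hy & ->) b. apply H6; auto. }
  intro Hg. apply Hg; auto. intros s (a & b & ->). apply H7.
Qed.
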